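(* Let $f:\{0,1\}^n\to\{0,1\}$ be a total Boolean function. Then $\mathsf{maxPI}(f)\le\mathsf{sumPI}(f)^4$.
   Context: With $p=\{p_x\}$ ranging over families of probability distributions on $[n]$, $$\mathsf{sumPI}(f)=\min_{p}\ \max_{x,y:\ f(x)\neq f(y)} \frac{1}{\sum_{i:\,x_i\neq y_i}\sqrt{p_x(i)p_y(i)}},\qquad \mathsf{maxPI}(f)=\min_{p}\ \max_{x,y:\ f(x)\neq f(y)} \frac{1}{\max_{i:\,x_i\neq y_i}\sqrt{p_x(i)p_y(i)}}.$$ *)

(* Defs.v *)
From HB Require Import structures.
From mathcomp Require Import all_boot all_order all_algebra.
From mathcomp Require Import classical_sets boolp reals constructive_ereal ereal.
Set Implicit Arguments. Unset Strict Implicit. Unset Printing Implicit Defensive.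
Import Order.TTheory GRing.Theory Num.Theory.
Local Open Scope ring_scope.
Local Open Scope classical_set_scope.

Notation bitstr n := {ffun 'I_n -> bool}.

Definition prob_family (R : realType) (n : nat) (p : bitstr n -> 'I_n -> R) : Prop :=
  forall x, (forall i, 0 <= p x i) /\ \sum_(i < n) p x i = 1.

Definition inve (R : realType) (s : R) : \bar R :=
  if s == 0 then +oo%E else (s^-1)%:E.

(* objective of sumPI for a fixed family p: max over pairs with f x != f y
   (the max over an empty set of pairs is taken to be 0). *)
Definition sumPI_obj (R : realType) (n : nat) (f : bitstr n -> bool)
    (p : bitstr n -> 'I_n -> R) : \bar R :=
  \big[Order.max/0%E]_(xy : bitstr n * bitstr n | f xy.1 != f xy.2)
     inve (\sum_(i < n | xy.1 i != xy.2 i) Num.sqrt (p xy.1 i * p xy.2 i)).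

Definition maxPI_obj (R : realType) (n : nat) (f : bitstr n -> bool)
    (p : bitstr n -> 'I_n -> R) : \bar R :=
  \big[Order.max/0%E]_(xy : bitstr n * bitstr n | f xy.1 != f xy.2)
     inve (\big[Order.max/0]_(i < n | xy.1 i != xy.2 i) Num.sqrt (p xy.1 i * p xy.2 i)).

(* min over families p (taken as an infimum; it is attained by compactness). *)
Definition sumPI (R : realType) (n : nat) (f : bitstr n -> bool) : \bar R :=
  ereal_inf [set sumPI_obj f p | p in [set p | prob_family p]].

Definition maxPI (R : realType) (n : nat) (f : bitstr n -> bool) : \bar R :=
  ereal_inf [set maxPI_obj f p | p in [set p | prob_family p]].

(* Main.v *)
Require Import Defs.
From HB Require Import structures.
From mathcomp Require Import all_boot all_order all_algebra.
From mathcomp Require Import classical_sets boolp reals constructive_ereal ereal.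
From mathcomp Require Import ring lra.
Import Order.TTheory GRing.Theory Num.Theory.
Set Implicit Arguments. Unset Strict Implicit. Unset Printing Implicit Defensive.
Local Open Scope ring_scope.

Definition flip n (x : bitstr n) (B : {set 'I_n}) : bitstr n :=
  [ffun i => if i \in B then ~~ x i else x i].
Definition sens n (f : bitstr n -> bool) x B := f (flip x B) != f x.
Definition good n f (x : bitstr n) (F : {set {set 'I_n}}) :=
  [forall B in F, sens f x B] && finset.trivIset F.
Definition bsx n f (x: bitstr n) := (\max_(F | good f x F) #|F|)%N.
Definition bsf n f := (\max_(x : bitstr n) bsx f x)%N.
Definition minsens n f (x : bitstr n) B :=
  sens f x B && [forall C : {set 'I_n}, (C \proper B) ==> ~~ sens f x C].
Definition mgood n f (x : bitstr n) (F : {set {set 'I_n}}) :=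
  [forall B in F, minsens f x B] && finset.trivIset F.
Definition Fx n f (x : bitstr n) : {set {set 'I_n}} :=
  [arg max_(F > finset.set0 | mgood f x F) #|F|]%N.
Definition Ux n f (x : bitstr n) := finset.cover (Fx f x).

Lemma flip_diff n (x : bitstr n) B i : (x i != flip x B i) = (i \in B).
Proof. by rewrite /flip ffunE; case: (i \in B); case: (x i). Qed.

Lemma flip_self n (x y : bitstr n) : flip x [set i | x i != y i] = y.
Proof. by apply/ffunP=> i; rewrite /flip ffunE inE; case: (x i); case: (y i). Qed.

Lemma flip0 n (x : bitstr n) : flip x finset.set0 = x.
Proof. by apply/ffunP=> i; rewrite /flip ffunE inE. Qed.

Lemma sens_neq0 n f (x : bitstr n) B : sens f x B -> B != finset.set0.
Proof. by apply: contraL => /eqP ->; rewrite /sens flip0 eqxx. Qed.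

Lemma good_le n f (x : bitstr n) F : good f x F -> (#|F| <= bsf f)%N.
Proof.
move=> g; have h1 := @leq_bigmax_cond _ (good f x) (fun F : {set {set 'I_n}} => #|F|) F g.
have h2 := @leq_bigmax _ (fun x => bsx f x) x.
exact: leq_trans h1 h2.
Qed.

Lemma minsens_card n f (x : bitstr n) B : minsens f x B -> (#|B| <= bsf f)%N.
Proof.
case/andP=> sB /forallP minB.
set z := flip x B.
have gz : good f z [set [set i] | i in B].
  apply/andP; split.
    apply/forall_inP => C /imsetP [i iB ->].
    rewrite /sens; have -> : flip z [set i] = flip x (B :\ i).
      apply/ffunP=> j; rewrite /z /flip !ffunE !inE.
      by case: (j =P i) => [->|ne]; rewrite ?iB /=; case: (x _).
    have /implyP := minB (B :\ i); rewrite properD1 // => /(_ isT) ns.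
    move: ns sB; rewrite /sens /z; move=> /negbNE /eqP ->.
    by rewrite eq_sym.
  apply/finset.trivIsetP => C D /imsetP [i _ ->] /imsetP [j _ ->].
  rewrite (inj_eq set1_inj) => ij.
  by rewrite disjoint_sym disjoints1 inE eq_sym.
have := good_le gz.
by rewrite card_imset //; apply: set1_inj.
Qed.

Lemma mgood0 n f (x : bitstr n) : mgood f x finset.set0.
Proof.
apply/andP; split; first by apply/forall_inP => B; rewrite inE.
by rewrite /finset.trivIset /finset.cover !big_set0 cards0.
Qed.

Lemma Fx_spec n f (x : bitstr n) :
  mgood f x (Fx f x) /\ forall F, mgood f x F -> (#|F| <= #|Fx f x|)%N.
Proof. by rewrite /Fx; case: arg_maxnP; first exact: mgood0. Qed.

Lemma Ux_card n f (x : bitstr n) : (#|Ux f x| <= bsf f * bsf f)%N.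
Proof.
have [/andP [/forall_inP mF tF] _] := Fx_spec f x.
apply: leq_trans ((leq_card_cover (Fx f x)).1) _.
have h : (\sum_(B in Fx f x) #|B| <= \sum_(B in Fx f x) bsf f)%N.
  by apply: leq_sum => B HB; exact: minsens_card (mF B HB).
apply: leq_trans h _.
rewrite sum_nat_const mulnC leq_mul2l; apply/orP; right.
apply: (@good_le _ f x).
apply/andP; split => //; apply/forall_inP => B /mF /andP [] //.
Qed.

Lemma Ux_cert n f (x y : bitstr n) :
  (forall i, i \in Ux f x -> x i = y i) -> f y = f x.
Proof.
move=> agree; apply/eqP; apply/negPn/negP => ne.
set D := [set i | x i != y i].
have sD : sens f x D by rewrite /sens flip_self.
set C := [arg min_(C < D | sens f x C && (C \subset D)) #|C|]%N.
have [sC CD minC] : [/\ sens f x C, C \subset D &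
    forall C', sens f x C' -> C' \subset D -> (#|C| <= #|C'|)%N].
  rewrite /C; case: arg_minnP; first by rewrite sD subxx.
  move=> C0 /andP [s1 s2] h; split => // C' s3 s4; apply: h; by rewrite s3 s4.
have mC : minsens f x C.
  apply/andP; split => //; apply/forallP => C'; apply/implyP => pC.
  apply/negP => sC'.
  have := minC C' sC' (fintype.subset_trans (proper_sub pC) CD).
  by rewrite leqNgt proper_card.
have [/andP [/forall_inP mF tF] maxF] := Fx_spec f x.
have s0 : finset.set0 \notin Fx f x.
  by apply/negP => /mF /andP [] /sens_neq0; rewrite eqxx.
have dis : {in Fx f x, forall B : {set 'I_n}, [disjoint C & B]}.
  move=> B HB; rewrite disjoint_subset; apply/fintype.subsetP => i iC.
  rewrite inE; apply/negP => iB.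
  have iU : i \in Ux f x by apply/bigcupP; exists B.
  by move: (fintype.subsetP CD i iC); rewrite inE agree // eqxx.
have [tF' nC] := trivIsetU1 dis tF s0.
have mF' : mgood f x (C |: Fx f x).
  apply/andP; split => //; apply/forall_inP => B; rewrite in_setU1 => /orP [/eqP -> //|].
  exact: mF.
have := maxF _ mF'.
by rewrite cardsU1 nC add1n ltnn.
Qed.

Lemma Ux_pair n f (x y : bitstr n) : f x != f y ->
  exists i, [/\ i \in Ux f x, i \in Ux f y & x i != y i].
Proof.
move=> fxy; apply/not_existsP => H.
set z : bitstr n := [ffun i => if i \in Ux f x then x i else y i].
have zx : f z = f x.
  by apply: Ux_cert => i iU; rewrite ffunE iU.
have zy : f z = f y.
  apply: Ux_cert => i iU; rewrite ffunE; case: ifP => // iU'.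
  apply/eqP; apply/negP => ne; apply: (H i); split => //.
  by rewrite eq_sym; apply/negP.
by move: fxy; rewrite -zx zy eqxx.
Qed.

Lemma maxPI_upper (R : realType) n (f : bitstr n -> bool) : (0 < n)%N ->
  (maxPI R f <= ((bsf f * bsf f)%N%:R)%:E)%E.
Proof.
move=> n0.
set K2 := (bsf f * bsf f)%N.
pose p := fun (x : bitstr n) (i : 'I_n) =>
  if Ux f x == finset.set0 then (n%:R)^-1 else
  if i \in Ux f x then (#|Ux f x|%:R)^-1 else 0 : R.
have pf : prob_family p.
  move=> x; split.
    move=> i; rewrite /p; case: ifP => _; first by rewrite invr_ge0 ler0n.
    by case: ifP => _ //; rewrite invr_ge0 ler0n.
  case: (boolP (Ux f x == finset.set0)) => U0; rewrite /p ?U0 ?(negbTE U0).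
    by rewrite sumr_const card_ord -[_ *+ _]mulr_natr mulVf // pnatr_eq0 -lt0n.
  rewrite -big_mkcond /= sumr_const -[_ *+ _]mulr_natr mulVf //.
  by rewrite pnatr_eq0 cards_eq0.
apply: ge_ereal_inf; exists (maxPI_obj f p); first by exists p.
rewrite /maxPI_obj; apply: bigmax_le => [|[x y] /= fxy]; first by rewrite lee_fin ler0n.
have [i [iUx iUy xy]] := Ux_pair fxy.
have nex : Ux f x != finset.set0 by apply/set0Pn; exists i.
have ney : Ux f y != finset.set0 by apply/set0Pn; exists i.
have ax : (0 < #|Ux f x|)%N by rewrite card_gt0.
have ay : (0 < #|Ux f y|)%N by rewrite card_gt0.
have bx := Ux_card f x.
have byy := Ux_card f y.
have K2pos : (0 < K2)%N by apply: leq_trans ax bx.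
set M := \big[Order.max/0]_(j < n | x j != y j) Num.sqrt (p x j * p y j).
have HM : Num.sqrt (p x i * p y i) <= M by apply: le_bigmax_cond.
have pxi : p x i = (#|Ux f x|%:R)^-1 by rewrite /p (negbTE nex) iUx.
have pyi : p y i = (#|Ux f y|%:R)^-1 by rewrite /p (negbTE ney) iUy.
have key : (K2%:R)^-1 <= Num.sqrt (p x i * p y i) :> R.
  rewrite pxi pyi.
  have h0 : 0 <= (K2%:R : R)^-1 by rewrite invr_ge0 ler0n.
  rewrite -[X in X <= _](ger0_norm h0) -sqrtr_sqr ler_sqrt; last first.
    by rewrite mulr_ge0 // invr_ge0 ler0n.
  rewrite expr2; apply: ler_pM => //.
    by rewrite lef_pV2 ?posrE ?ltr0n // ler_nat.
  by rewrite lef_pV2 ?posrE ?ltr0n // ler_nat.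
have Mpos : 0 < M.
  apply: lt_le_trans HM; apply: lt_le_trans key.
  by rewrite invr_gt0 ltr0n.
rewrite /Defs.inve (gt_eqF Mpos) lee_fin.
rewrite -[X in _ <= X](invrK (K2%:R : R)) lef_pV2 ?posrE ?invr_gt0 ?ltr0n //.
exact: le_trans key HM.
Qed.

Lemma amgm (R : realType) (a b s : R) : 0 <= a -> 0 <= b -> 0 < s ->
  Num.sqrt (a * b) <= s / 2 * a + (2 * s)^-1 * b.
Proof.
move=> a0 b0 s0.
rewrite sqrtrM //.
have ua := sqr_sqrtr a0; have ub := sqr_sqrtr b0.
have u0 := sqrtr_ge0 a; have v0 := sqrtr_ge0 b.
move: (Num.sqrt a) (Num.sqrt b) ua ub u0 v0 => u v ua ub u0 v0.
rewrite -ua -ub.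
have -> : s / 2 * u ^+ 2 + (2 * s)^-1 * v ^+ 2 = (s ^+ 2 * u ^+ 2 + v ^+ 2) / (2 * s).
  by field; rewrite gt_eqF.
rewrite ler_pdivlMr; last by rewrite mulr_gt0.
have h := sqr_ge0 (s * u - v). nra.
Qed.

Lemma sub_sum_le (R : realType) n (A : {set 'I_n}) (q : 'I_n -> R) :
  (forall i, 0 <= q i) -> \sum_(i in A) q i <= \sum_i q i.
Proof.
move=> q0; rewrite [X in _ <= X](bigID (mem A)) /= lerDl.
by apply: sumr_ge0 => i _.
Qed.

Lemma sumPI_lower (R : realType) n (f : bitstr n -> bool) (p : bitstr n -> 'I_n -> R) :
  prob_family p -> ((Num.sqrt (bsf f)%:R)%:E <= sumPI_obj f p)%E.
Proof.
move=> pf.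
have hobj : (0 <= sumPI_obj f p)%E by rewrite /sumPI_obj; exact: bigmax_ge_id.
have cT : (0 < #|{: bitstr n}|)%N by apply/card_gt0P; exists [ffun => false].
have [x0 Ex0] := @bigop.eq_bigmax _ (fun x => bsx f x) cT.
set F0 := [arg max_(F > finset.set0 | good f x0 F) #|F|]%N.
have [gF0 maxF0] : good f x0 F0 /\ forall F, good f x0 F -> (#|F| <= #|F0|)%N.
  rewrite /F0; case: arg_maxnP => //.
  apply/andP; split; first by apply/forall_inP => B; rewrite inE.
  by rewrite /finset.trivIset /finset.cover !big_set0 cards0.
have kE : bsf f = #|F0|.
  apply/eqP; rewrite eqn_leq; apply/andP; split; last exact: good_le gF0.
  by rewrite /bsf Ex0 /bsx; apply/bigmax_leqP => F gF; exact: maxF0.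
rewrite kE; set k := #|F0|.
case: (posnP k) => [k0|kpos].
  by rewrite k0 sqrtr0.
set s := Num.sqrt (k%:R : R).
have s0 : 0 < s by rewrite sqrtr_gt0 ltr0n.
have ks : (k%:R : R) = s ^+ 2 by rewrite sqr_sqrtr // ler0n.
case/andP: gF0 => /forall_inP sF0 tF0.
pose S B := \sum_(i < n | x0 i != flip x0 B i) Num.sqrt (p x0 i * p (flip x0 B) i).
have S0 : forall B, 0 <= S B by move=> B; apply: sumr_ge0 => i _; exact: sqrtr_ge0.
have lb : forall B, B \in F0 -> (Defs.inve (S B) <= sumPI_obj f p)%E.
  move=> B BF; rewrite /sumPI_obj.
  have c : f (x0, flip x0 B).1 != f (x0, flip x0 B).2 by rewrite eq_sym; exact: sF0.
  exact: (@le_bigmax_cond _ _ _ 0%E (x0, flip x0 B) (fun xy : bitstr n * bitstr n => f xy.1 != f xy.2) _ c).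
have SB : forall B, B \in F0 -> S B <= s / 2 * \sum_(i in B) p x0 i + (2 * s)^-1.
  move=> B BF.
  rewrite /S (eq_bigl (fun i => i \in B)); last by move=> i; rewrite flip_diff.
  have [p0x _] := pf x0; have [p0y p1y] := pf (flip x0 B).
  apply: le_trans (ler_sum _ (fun i _ => amgm (p0x i) (p0y i) s0)) _.
  rewrite big_split /= -!mulr_sumr lerD2l.
  rewrite -[leRHS]mulr1 ler_wpM2l; last by rewrite -p1y; exact: sub_sum_le.
  all: try done. by rewrite invr_ge0 ltW // mulr_gt0.
have Ssum : \sum_(B in F0) S B <= s.
  apply: le_trans (ler_sum _ SB) _.
  rewrite big_split /= -mulr_sumr sumr_const -big_trivIset //.
  have [p0x p1x] := pf x0.
  have X1 : \sum_(i in finset.cover F0) p x0 i <= 1 by rewrite -p1x; exact: sub_sum_le.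
  have X0 : 0 <= \sum_(i in finset.cover F0) p x0 i by apply: sumr_ge0.
  move: X1 X0; set X := \sum_(i in _) _ => X1 X0.
  rewrite -/k -[_ *+ k]mulr_natl ks.
  have -> : s ^+ 2 * (2 * s)^-1 = s / 2 by field; rewrite gt_eqF.
  nra.
case E: (sumPI_obj f p) => [M| |]; last by rewrite E in hobj.
  rewrite lee_fin leNgt; apply/negP => Ms.
  have [B0 B0F] : exists B, B \in F0 by apply/card_gt0P.
  have key : forall B, B \in F0 -> 0 < M /\ M^-1 <= S B.
    move=> B BF; have := lb B BF; rewrite E /Defs.inve.
    case: ifP => [_|/negbT SBn]; first by rewrite leNgt ltey.
    rewrite lee_fin => h.
    have SBp : 0 < S B by rewrite lt_def SBn S0.
    have Mp : 0 < M by apply: lt_le_trans h; rewrite invr_gt0.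
    split => //; rewrite -[X in _ <= X](invrK (S B)) lef_pV2 ?posrE ?invr_gt0 //.
  have [Mp _] := key B0 B0F.
  have h1 : \sum_(B in F0) M^-1 <= \sum_(B in F0) S B.
    by apply: ler_sum => B BF; case: (key B BF).
  rewrite sumr_const -/k -mulr_natl in h1.
  have h2 : s < k%:R * M^-1.
    rewrite ks -[X in X < _]mulr1 expr2 -mulrA ltr_pM2l // ltr_pdivlMr // mul1r; exact: Ms.
  by move: (lt_le_trans h2 (le_trans h1 Ssum)); rewrite ltxx.
by rewrite leey.
Qed.

Theorem mainTheorem13 (R : realType) (n : nat) (f : {ffun 'I_n -> bool} -> bool) :
  (maxPI R f <= sumPI R f * sumPI R f * sumPI R f * sumPI R f)%E.
Proof.
case: (posnP n) => [n0|npos].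
  have -> : sumPI R f = +oo%E.
    apply/ereal_inf_pinfty => y [p pf _]; exfalso.
    have [_] := pf [ffun => false].
    by move: p {pf}; rewrite n0 => p; rewrite big_ord0 => /eqP; rewrite eq_sym oner_eq0.
  by rewrite !mulyy leey.
set s := Num.sqrt ((bsf f)%:R : R).
have s0 : 0 <= s by exact: sqrtr_ge0.
have ks : ((bsf f)%:R : R) = s ^+ 2 by rewrite sqr_sqrtr // ler0n.
have lo : (s%:E <= sumPI R f)%E.
  apply: le_ereal_inf_tmp => y [p pf <-]; exact: sumPI_lower.
apply: le_trans (@maxPI_upper R n f npos) _.
have -> : ((bsf f * bsf f)%N%:R : R) = s * s * s * s.
  by rewrite natrM ks expr2 !mulrA.
rewrite !EFinM.
have se : (0 <= s%:E)%E by rewrite lee_fin.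
apply: lee_pmul; [by rewrite ?mule_ge0|by []|idtac|exact: lo].
apply: lee_pmul; [by rewrite ?mule_ge0|by []|idtac|exact: lo].
by apply: lee_pmul.
Qed.
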